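(* Let $(\Gamma,\psi)$ be an $H$-asymptotic couple with asymptotic integration and let $\gamma\in(\Gamma^{>})'$. Then $\int\gamma>-\int s(\gamma)=-\chi(\int\gamma)>0$. Furthermore, if $\gamma_0,\gamma_1\in(\Gamma^{>})'$ and $\gamma_0\le\gamma_1$, then $-\int s(\gamma_0)\le-\int s(\gamma_1)$.
   Context: An asymptotic couple is a pair $(\Gamma,\psi)$ with $\Gamma$ an ordered abelian group and $\psi:\Gamma\setminus\{0\}\to\Gamma$ such that for all nonzero $\alpha,\beta$: $\alpha+\beta\ne0\Rightarrow\psi(\alpha+\beta)\ge\min(\psi(\alpha),\psi(\beta))$; $\psi(k\alpha)=\psi(\alpha)$ for $k\in\mathbb{Z}\setminus\{0\}$; $\alpha>0\Rightarrow\alpha+\psi(\alpha)>\psi(\beta)$. $H$-asymptotic: $0<\alpha\le\beta\Rightarrow\psi(\alpha)\ge\psi(\beta)$. Write $\gamma'=\gamma+\psi(\gamma)$ for $\gamma\ne0$, $(\Gamma^{>})'=\{\gamma':\gamma>0\}$. Asymptotic integration: every $\alpha\in\Gamma$ equals $\gamma'$ for a (necessarily unique) $\gamma\ne0$, denoted $\int\alpha$. Successor function $s(\alpha)=\psi(\int\alpha)$; contraction map $\chi(\alpha)=\int\psi(\alpha)$ for $\alpha\ne0$, $\chi(0)=0$. *)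

(* Defs.v *)
From mathcomp Require Import all_boot all_order all_algebra.
From Stdlib Require Import ClassicalEpsilon.
Set Implicit Arguments. Unset Strict Implicit. Unset Printing Implicit Defensive.
Import GRing.Theory.
Local Open Scope ring_scope.

Definition oag_axioms (G : zmodType) (le : rel G) : Prop :=
  [/\ forall x, le x x,
      forall x y, le x y -> le y x -> x = y,
      forall x y z, le x y -> le y z -> le x z,
      forall x y, le x y || le y x
    & forall x y z, le x y -> le (x + z) (y + z)].

Definition ltr (G : zmodType) (le : rel G) (x y : G) : bool := le x y && (x != y).

(* Asymptotic couple (Gamma, psi); psi is given as a total function G -> G,
   its value at 0 is irrelevant (never used).
   "psi(a+b) >= min(psi a, psi b)" is written out for the total order le. *)
Definition asymptotic_couple (G : zmodType) (le : rel G) (psi : G -> G) : Prop :=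
  [/\ oag_axioms le,
      forall a b : G, a != 0 -> b != 0 -> a + b != 0 ->
        le (psi a) (psi (a + b)) || le (psi b) (psi (a + b)),
      forall (a : G) (k : int), a != 0 -> k != 0 -> psi (a *~ k) = psi a
    & forall a b : G, a != 0 -> b != 0 -> ltr le 0 a -> ltr le (psi b) (a + psi a)].

Definition H_asymptotic (G : zmodType) (le : rel G) (psi : G -> G) : Prop :=
  forall a b : G, ltr le 0 a -> le a b -> le (psi b) (psi a).

Definition deriv (G : zmodType) (psi : G -> G) (g : G) : G := g + psi g.

Definition pos_derivs (G : zmodType) (le : rel G) (psi : G -> G) (a : G) : Prop :=
  exists g, ltr le 0 g /\ a = deriv psi g.

Definition has_asymptotic_integration (G : zmodType) (psi : G -> G) : Prop :=
  forall a : G, exists g : G, g != 0 /\ deriv psi g = a.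

(* int a: some (under asymptotic integration, the unique) nonzero g with g' = a. *)
Definition integ (G : zmodType) (psi : G -> G) (a : G) : G :=
  epsilon (inhabits (0 : G)) (fun g => g != 0 /\ deriv psi g = a).

Definition succ_fun (G : zmodType) (psi : G -> G) (a : G) : G := psi (integ psi a).

Definition contraction (G : zmodType) (psi : G -> G) (a : G) : G :=
  if a == 0 then 0 else integ psi (psi a).

(* Main.v *)
Require Import Defs.
From mathcomp Require Import all_boot all_order all_algebra.
From Stdlib Require Import ClassicalEpsilon.
Import GRing.Theory.
Local Open Scope ring_scope.
Set Implicit Arguments. Unset Strict Implicit.

Section Aux.
Variables (G : zmodType) (le : rel G).
Hypothesis Ho : oag_axioms le.

Lemma o_refl x : le x x. Proof. by case: Ho => [r a t o d]. Qed.
Lemma o_anti x y : le x y -> le y x -> x = y. Proof. by case: Ho => [r a t o d]; apply: a. Qed.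
Lemma o_trans x y z : le x y -> le y z -> le x z. Proof. by case: Ho => [r a t o d]; apply: t. Qed.
Lemma o_tot x y : le x y || le y x. Proof. by case: Ho => [r a t o d]. Qed.
Lemma o_addr x y z : le x y -> le (x + z) (y + z). Proof. by case: Ho => [r a t o d]; apply: d. Qed.
Lemma o_addl x y z : le x y -> le (z + x) (z + y).
Proof. by move=> h; rewrite ![z + _]addrC; apply: o_addr. Qed.
Lemma o_addr_rev x y z : le (x + z) (y + z) -> le x y.
Proof. by move=> h; have := @o_addr _ _ (- z) h; rewrite !addrK. Qed.

Lemma o_nle_lt x y : ~~ le y x -> ltr le x y.
Proof.
move=> h; rewrite /ltr; have := o_tot x y; rewrite (negbTE h) orbF => ->.
by apply/eqP => e; move: h; rewrite e o_refl.
Qed.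
Lemma o_lt_nle x y : ltr le x y -> le y x -> False.
Proof. by case/andP => h1 /eqP h2 h3; apply: h2; apply: o_anti. Qed.
Lemma o_le_lt x y z : le x y -> ltr le y z -> ltr le x z.
Proof.
move=> h1 /andP[h2 h3]; apply/andP; split; first exact: o_trans h2.
apply/eqP => e; subst z; move/eqP: h3; apply; exact: o_anti.
Qed.
Lemma o_lt_le x y z : ltr le x y -> le y z -> ltr le x z.
Proof.
move=> /andP[h2 h3] h1; apply/andP; split; first exact: o_trans h1.
apply/eqP => e; subst z; move/eqP: h3; apply; exact: o_anti.
Qed.
Lemma o_ltaddr x y z : ltr le x y -> ltr le (x + z) (y + z).
Proof.
move=> /andP[h1 h2]; apply/andP; split; first exact: o_addr.
by apply: contraNneq h2 => /addIr ->.
Qed.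
Lemma o_ltaddl x y z : ltr le x y -> ltr le (z + x) (z + y).
Proof. by move=> h; rewrite ![z + _]addrC; apply: o_ltaddr. Qed.
End Aux.

Section Main.
Variables (G : zmodType) (le : rel G) (psi : G -> G).
Hypothesis Hac : asymptotic_couple le psi.
Hypothesis HH : H_asymptotic le psi.
Hypothesis Hai : has_asymptotic_integration psi.

Let Ho : oag_axioms le. Proof. by case: Hac. Qed.

Lemma deriv_mono a b : a != 0 -> b != 0 -> ltr le a b ->
  ltr le (Defs.deriv psi a) (Defs.deriv psi b).
Proof.
move=> a0 b0 ab; case: Hac => _ H2 _ H3; rewrite /Defs.deriv.
set d := b - a.
have bE : b = a + d by rewrite /d addrC subrK.
have d0 : ltr le 0 d.
  have := o_ltaddr Ho (- a) ab; by rewrite subrr.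
have dn0 : d != 0 by case/andP: d0 => _; rewrite eq_sym.
case: (boolP (le (psi a) (psi b))) => h.
  apply: (o_le_lt Ho (y := a + psi b)); first exact: (o_addl Ho).
  exact: (o_ltaddr Ho).
have hb : ltr le (psi b) (psi a) by exact: (o_nle_lt Ho).
have := H2 a d a0 dn0; rewrite -bE (negbTE h) /= => hd.
have := H3 d a dn0 a0 d0 => hl.
have hl2 : ltr le (psi a) (d + psi b).
  apply: (o_lt_le Ho hl). apply: (o_addl Ho). exact: hd.
have := o_ltaddl Ho a hl2; by rewrite addrA -bE.
Qed.

Lemma deriv_refl a b : a != 0 -> b != 0 -> le (Defs.deriv psi a) (Defs.deriv psi b) -> le a b.
Proof.
move=> a0 b0 h; case: (boolP (le a b)) => // nab.
have := deriv_mono b0 a0 (o_nle_lt Ho nab) => l.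
by case: (o_lt_nle Ho l h).
Qed.

Lemma deriv_inj a b : a != 0 -> b != 0 -> Defs.deriv psi a = Defs.deriv psi b -> a = b.
Proof.
move=> a0 b0 e; apply: (o_anti Ho); apply: deriv_refl => //; rewrite e; exact: o_refl Ho _.
Qed.

Lemma integ_spec a : integ psi a != 0 /\ Defs.deriv psi (integ psi a) = a.
Proof.
rewrite /integ; have [g [g0 e]] := Hai a.
apply: (epsilon_spec (inhabits (0:G)) (fun g => g != 0 /\ Defs.deriv psi g = a)); by exists g.
Qed.

Lemma integ_pos gam : pos_derivs le psi gam -> ltr le 0 (integ psi gam).
Proof.
case=> g [g0 ->]; have g0' : g != 0 by case/andP: g0; rewrite eq_sym.
have [i0 ie] := integ_spec (Defs.deriv psi g).
by rewrite (deriv_inj i0 g0' ie).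
Qed.

Lemma psi_opp b : b != 0 -> psi (- b) = psi b.
Proof. by case: Hac => _ _ H _ b0; rewrite -(H b (-1) b0 isT) mulrN1z. Qed.

Theorem part1 gam : pos_derivs le psi gam ->
  ltr le (- integ psi (succ_fun psi gam)) (integ psi gam) /\
  ltr le 0 (- integ psi (succ_fun psi gam)).
Proof.
move=> hg; have a0 := integ_pos hg; set a := integ psi gam in a0 *.
have an0 : a != 0 by case/andP: a0; rewrite eq_sym.
rewrite /succ_fun -/a; have [bn0 be] := integ_spec (psi a).
set b := integ psi (psi a) in bn0 be *.
have bneg : ltr le b 0.
  apply: (o_nle_lt Ho); apply/negP => hb; have bp : ltr le 0 b by apply/andP; rewrite eq_sym.
  case: Hac => _ _ _ H3; have := H3 b a bn0 an0 bp; rewrite -/(Defs.deriv psi b) be.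
  by case/andP => _; rewrite eqxx.
have nb : ltr le 0 (- b) by have := o_ltaddr Ho (- b) bneg; rewrite subrr add0r.
split => //.
apply: (o_nle_lt Ho); apply/negP => h.
have := HH a0 h; rewrite psi_opp // => h2.
have : le (0 + psi b) (b + psi b) by rewrite add0r -/(Defs.deriv psi b) be.
move/(o_addr_rev Ho) => h3; exfalso; exact: (o_lt_nle Ho bneg h3).
Qed.

End Main.

Theorem lemma3p13 (G : zmodType) (le : rel G) (psi : G -> G) :
  asymptotic_couple le psi -> H_asymptotic le psi ->
  has_asymptotic_integration psi ->
  (forall gamma : G, pos_derivs le psi gamma ->
     [/\ ltr le (- integ psi (succ_fun psi gamma)) (integ psi gamma),
         - integ psi (succ_fun psi gamma) = - contraction psi (integ psi gamma)
       & ltr le 0 (- integ psi (succ_fun psi gamma))]) /\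
  (forall gamma0 gamma1 : G, pos_derivs le psi gamma0 -> pos_derivs le psi gamma1 ->
     le gamma0 gamma1 ->
     le (- integ psi (succ_fun psi gamma0)) (- integ psi (succ_fun psi gamma1))).
Proof.
move=> Hac HH Hai; have Ho : oag_axioms le by case: Hac.
split.
  move=> gam hg; have [h1 h2] := part1 Hac HH Hai hg; split => //.
  have a0 := integ_pos Hac Hai hg.
  have an0 : integ psi gam != 0 by case/andP: a0; rewrite eq_sym.
  by rewrite /contraction (negbTE an0).
move=> g0 g1 h0 h1 le01.
have p0 := integ_pos Hac Hai h0; have p1 := integ_pos Hac Hai h1.
have n0 : integ psi g0 != 0 by case/andP: p0; rewrite eq_sym.
have n1 : integ psi g1 != 0 by case/andP: p1; rewrite eq_sym.
have [_ e0] := integ_spec Hai g0; have [_ e1] := integ_spec Hai g1.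
have la : le (integ psi g0) (integ psi g1).
  by apply: (deriv_refl Hac) => //; rewrite e0 e1.
have lp := HH _ _ p0 la.
rewrite /succ_fun.
have [m0 f0] := integ_spec Hai (psi (integ psi g0)).
have [m1 f1] := integ_spec Hai (psi (integ psi g1)).
have lb : le (integ psi (psi (integ psi g1))) (integ psi (psi (integ psi g0))).
  by apply: (deriv_refl Hac) => //; rewrite f0 f1.
set x := integ psi (psi (integ psi g1)) in lb *.
set y := integ psi (psi (integ psi g0)) in lb *.
have := o_addr Ho (- x - y) lb.
by rewrite addrA subrr add0r addrCA subrr addr0.
Qed.
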